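(* Let $m,t,n$ be positive integers with $mt<n\le 2^m$, let $\alpha=(\alpha_1,\dots,\alpha_n)\in\mathbb{F}_{2^m}^n$ be a support tuple, and for $p\in\mathbb{F}_2^n$ with $0<\mathrm{wt}(p)\le t$, $d\in\mathbb{N}$ with $d<t$ and $\varepsilon\in\mathbb{F}_{2^m}$, let $\tilde p\in\mathbb{F}_2^n$ be defined by $\tilde p_k=1$ if and only if $\varepsilon\alpha_k^d+\prod_{l\in I_p}(\alpha_k-\alpha_l)=0$. (a) Suppose $d=0$ and $p=e^{(i_1)}+e^{(i_2)}$ with $i_1\neq i_2$, and suppose $\mathrm{wt}(\tilde p)=2$, say $I_{\tilde p}=\{j_1,j_2\}$. Then $\alpha_{i_1}+\alpha_{i_2}=\alpha_{j_1}+\alpha_{j_2}$. (b) Suppose $d=2$ and $p=e^{(i)}$ for some $i\in\{1,\dots,n\}$, and suppose $\mathrm{wt}(\tilde p)=2$, say $I_{\tilde p}=\{j_1,j_2\}$. Then $\alpha_i\alpha_{j_1}+\alpha_i\alpha_{j_2}+\alpha_{j_1}\alpha_{j_2}=0$. If, additionally, $\alpha_i\neq 0$, then $\alpha_{j_1}\neq 0$ and $\alpha_{j_2}\neq 0$.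
   Context: $\mathbb{F}_{2^m}$ denotes the finite field with $2^m$ elements. A support tuple is a tuple $\alpha\in\mathbb{F}_{2^m}^n$ with pairwise distinct entries. For $c\in\mathbb{F}_2^n$, $I_c=\{i\mid c_i=1\}$ and $\mathrm{wt}(c)=\#I_c$. $e^{(i)}$ denotes the $i$-th standard basis vector of $\mathbb{F}_2^n$. The vector $\tilde p$ is the output of decoding with the faulty error-locator polynomial $\varepsilon x^d+\prod_{l\in I_p}(x-\alpha_l)$ (its zeros among the $\alpha_k$). *)

(* Defs.v *)
From HB Require Import structures.
From mathcomp Require Import all_boot all_order all_algebra all_field.
Set Implicit Arguments. Unset Strict Implicit. Unset Printing Implicit Defensive.
Import GRing.Theory.
Local Open Scope ring_scope.

(* Binary vectors c in F_2^n are row vectors 'rV['F_2]_n; indices are 'I_n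
   (0-based instead of 1-based). *)

Definition supp n (c : 'rV['F_2]_n) : {set 'I_n} := [set i | c 0 i == 1].

Definition wt n (c : 'rV['F_2]_n) : nat := #|supp c|.

Definition ebase n (i : 'I_n) : 'rV['F_2]_n := delta_mx 0 i.

Definition support_tuple (F : finFieldType) n (alpha : 'I_n -> F) : Prop :=
  injective alpha.

Definition ptilde (F : finFieldType) n (alpha : 'I_n -> F)
    (p : 'rV['F_2]_n) (d : nat) (eps : F) : 'rV['F_2]_n :=
  \row_k (if eps * alpha k ^+ d + \prod_(l in supp p) (alpha k - alpha l) == 0
          then 1 else 0).

(* Main.v *)
Require Import Defs.
From HB Require Import structures.
From mathcomp Require Import all_boot all_order all_algebra all_field.
From mathcomp Require Import ring.
Import GRing.Theory.
Local Open Scope ring_scope.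

Lemma mem_supp_pt (F : finFieldType) n (alpha : 'I_n -> F) p d eps k :
  (k \in supp (ptilde alpha p d eps)) =
  (eps * alpha k ^+ d + \prod_(l in supp p) (alpha k - alpha l) == 0).
Proof.
rewrite /supp /ptilde inE mxE.
by case: (_ == 0).
Qed.

Lemma supp_e1 n (i : 'I_n) : supp (ebase i) = [set i].
Proof.
apply/setP => k; rewrite /supp /ebase !inE mxE eqxx /= eq_sym.
by case: (k == i).
Qed.

Lemma supp_e2 n (i1 i2 : 'I_n) : i1 != i2 ->
  supp (ebase i1 + ebase i2) = [set i1; i2].
Proof.
move=> ne; apply/setP => k; rewrite /supp /ebase !inE !mxE /=.
case: (eqVneq k i1) => [->|n1] /=; first by rewrite (negbTE ne).
by rewrite add0r; case: (k == i2).
Qed.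

Theorem proposition5p2 (m t n : nat) (F : finFieldType)
    (alpha : 'I_n -> F) (p : 'rV['F_2]_n) (d : nat) (eps : F) :
  (0 < m)%N -> (0 < t)%N -> (0 < n)%N ->
  (m * t < n)%N -> (n <= 2 ^ m)%N ->
  #|F| = (2 ^ m)%N ->
  support_tuple alpha ->
  (0 < wt p)%N -> (wt p <= t)%N ->
  (d < t)%N ->
  (* (a) *)
  (forall (i1 i2 j1 j2 : 'I_n),
      d = 0%N -> p = ebase i1 + ebase i2 -> i1 != i2 ->
      wt (ptilde alpha p d eps) = 2%N ->
      supp (ptilde alpha p d eps) = [set j1; j2] ->
      alpha i1 + alpha i2 = alpha j1 + alpha j2)
  /\
  (* (b) *)
  (forall (i j1 j2 : 'I_n),
      d = 2%N -> p = ebase i ->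
      wt (ptilde alpha p d eps) = 2%N ->
      supp (ptilde alpha p d eps) = [set j1; j2] ->
      alpha i * alpha j1 + alpha i * alpha j2 + alpha j1 * alpha j2 = 0
      /\ (alpha i != 0 -> alpha j1 != 0 /\ alpha j2 != 0)).
Proof.
move=> _ _ _ _ _ cardF inj _ _ _.
have ch2 : (2%:R : F) = 0.
  by apply: pcharf0; apply: (card_finPcharP cardF).
have neqj : forall (j1 j2 : 'I_n) q, wt q = 2%N -> supp q = [set j1; j2] ->
    alpha j1 != alpha j2.
  move=> j1 j2 q w s; move: w; rewrite /wt s cards2.
  case: (eqVneq j1 j2) => // ne _.
  by apply/eqP => /inj; apply/eqP.
split.
- move=> i1 i2 j1 j2 d0 pe ne w s.
  have nj := neqj _ _ _ w s.
  have h1 : j1 \in supp (ptilde alpha p d eps) by rewrite s !inE eqxx.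
  have h2 : j2 \in supp (ptilde alpha p d eps) by rewrite s !inE eqxx orbT.
  move: h1 h2; rewrite !mem_supp_pt pe supp_e2 // d0.
  rewrite !big_setU1 ?inE // !big_set1 !expr0 !mulr1 => /eqP e1 /eqP e2.
  set r1 := alpha j1 in e1 nj *; set r2 := alpha j2 in e2 nj *.
  set a1 := alpha i1 in e1 e2 *; set a2 := alpha i2 in e1 e2 *.
  have : (r1 - r2) * (r1 + r2 - (a1 + a2)) = 0.
    have -> : (r1 - r2) * (r1 + r2 - (a1 + a2)) =
      (eps + (r1 - a1) * (r1 - a2)) - (eps + (r2 - a1) * (r2 - a2)) by ring.
    by rewrite e1 e2 subrr.
  move/eqP; rewrite mulf_eq0 subr_eq0 (negbTE nj) /= subr_eq0 => /eqP ->.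
  by [].
- move=> i j1 j2 d2 pe w s.
  have nj := neqj _ _ _ w s.
  have h1 : j1 \in supp (ptilde alpha p d eps) by rewrite s !inE eqxx.
  have h2 : j2 \in supp (ptilde alpha p d eps) by rewrite s !inE eqxx orbT.
  move: h1 h2; rewrite !mem_supp_pt pe supp_e1 d2 !big_set1 => /eqP e1 /eqP e2.
  set r1 := alpha j1 in e1 nj *; set r2 := alpha j2 in e2 nj *.
  set a := alpha i in e1 e2 *.
  have es : eps * (r1 + r2) = -1.
    have : (r1 - r2) * (eps * (r1 + r2) + 1) = 0.
      have -> : (r1 - r2) * (eps * (r1 + r2) + 1) =
        (eps * r1 ^+ 2 + (r1 - a)) - (eps * r2 ^+ 2 + (r2 - a)) by ring.
      by rewrite e1 e2 subrr.
    move/eqP; rewrite mulf_eq0 subr_eq0 (negbTE nj) /= addr_eq0 => /eqP //.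
  have epsn0 : eps != 0 by apply/eqP => e0; move: es; rewrite e0 mul0r => /eqP; rewrite eq_sym oppr_eq0 oner_eq0.
  have p1 : eps * (r1 * r2) = - a.
    have -> : eps * (r1 * r2) =
      eps * (r1 + r2) * r1 - (eps * r1 ^+ 2 + (r1 - a)) + r1 - a by ring.
    by rewrite es e1; ring.
  have p2 : eps * (a * (r1 + r2)) = - a.
    by rewrite mulrCA es mulrN1.
  have e3 : r1 * r2 = a * (r1 + r2).
    apply: (mulfI epsn0); by rewrite p1 p2.
  split.
    rewrite e3 -mulrDr -mulr2n -mulr_natr.
    by rewrite ch2 mulr0.
  move=> an0; split; apply/eqP => r0.
    by move: e1; rewrite r0 expr0n /= mulr0 add0r sub0r => /eqP; rewrite oppr_eq0 (negbTE an0).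
  by move: e2; rewrite r0 expr0n /= mulr0 add0r sub0r => /eqP; rewrite oppr_eq0 (negbTE an0).
Qed.
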